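(* For integers $n>1$ and positive integers $a\neq b$, $\chi_{ld}(K_{a,b}[\overline{K_{n}}])=2$.
   Context: All graphs are finite, simple and undirected. For a graph $G=(V,E)$ of order $N$ without isolated vertices, a bijection $f\colon V\to\{1,2,\dots,N\}$ is a local distance antimagic labeling if $w(u)\neq w(v)$ for every edge $uv$, where $w(u)=\sum_{x\in N(u)}f(x)$ and $N(u)$ is the open neighborhood of $u$. $\chi_{ld}(G)$ is the minimum number of distinct weights over all local distance antimagic labelings of $G$. $K_{a,b}$ is the complete bipartite graph, $\overline{K_n}$ is the edgeless graph on $n$ vertices. The lexicographic product $G[H]$ has vertex set $V(G)\times V(H)$, with $(g,h)$ adjacent to $(g',h')$ iff $gg'\in E(G)$, or $g=g'$ and $hh'\in E(H)$. *)

(* Defs.v *)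
From mathcomp Require Import all_boot.
Set Implicit Arguments. Unset Strict Implicit. Unset Printing Implicit Defensive.

(* A simple graph: a finite vertex type T with an adjacency relation e : rel T
   (assumed symmetric and irreflexive; all graphs built below are). *)


Definition Kbip (a b : nat) : rel ('I_a + 'I_b)%type :=
  fun x y => match x, y with
             | inl _, inr _ => true
             | inr _, inl _ => true
             | _, _ => false
             end.
Arguments Kbip : clear implicits.

Definition Kbar (n : nat) : rel 'I_n := fun _ _ => false.
Arguments Kbar : clear implicits.

Definition lexprod (T1 T2 : finType) (e1 : rel T1) (e2 : rel T2) : rel (T1 * T2)%type :=
  fun x y => e1 x.1 y.1 || ((x.1 == y.1) && e2 x.2 y.2).

(* A labeling is a bijection f : V -> {1,...,N}; we encode it as a bijection
   g : V -> 'I_N (N = #|V|) with f x = g x + 1. *)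
Definition label (T : finType) (g : {ffun T -> 'I_#|T|}) (x : T) : nat := (g x).+1.

Definition weight (T : finType) (e : rel T) (g : {ffun T -> 'I_#|T|}) (u : T) : nat :=
  \sum_(x : T | e u x) label g x.

Definition is_ld_antimagic (T : finType) (e : rel T) (g : {ffun T -> 'I_#|T|}) : bool :=
  injectiveb g && [forall u, forall v, e u v ==> (weight e g u != weight e g v)].

Definition num_weights (T : finType) (e : rel T) (g : {ffun T -> 'I_#|T|}) : nat :=
  size (undup [seq weight e g u | u <- enum T]).

(* chi_ld(G): minimum number of distinct weights over all local distance
   antimagic labelings (the default #|T| is an upper bound on num_weights and
   is only reached vacuously if no such labeling exists). *)
Definition chi_ld (T : finType) (e : rel T) : nat :=
  \big[minn/#|T|]_(g : {ffun T -> 'I_#|T|} | is_ld_antimagic e g) num_weights e g.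

(* Main.v *)
Require Import Defs.
From mathcomp Require Import all_boot.
From mathcomp Require Import fingroup perm zify.

Section S.
Variables a b n : nat.
Definition T : finType := (('I_a + 'I_b) * 'I_n)%type.
Local Notation e := (lexprod (Kbip a b) (Kbar n)).

Definition side (x : T) : bool := if x.1 is inl _ then true else false.
Definition SL (g : {ffun T -> 'I_#|T|}) := \sum_(x : T | side x) label g x.
Definition SR (g : {ffun T -> 'I_#|T|}) := \sum_(x : T | ~~ side x) label g x.

Lemma lex_eq (u x : T) : e u x = (side u != side x).
Proof.
case: u => [[i|i] k]; case: x => [[j|j] l]; by rewrite /lexprod /Kbip /Kbar /side /= ?andbF.
Qed.

Lemma weight_eq (g : {ffun T -> 'I_#|T|}) (u : T) : weight e g u = if side u then SR g else SL g.
Proof.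
rewrite /weight /SR /SL; case: ifP => su; apply: eq_bigl => x;
by rewrite lex_eq su; case: (side x).
Qed.

Lemma antimagic_iff (g : {ffun T -> 'I_#|T|}) : injectiveb g -> (0 < a) -> (0 < b) -> (0 < n) ->
  SL g != SR g -> is_ld_antimagic e g.
Proof.
move=> ig _ _ _ ne; rewrite /is_ld_antimagic ig /=.
apply/forallP => u; apply/forallP => v; apply/implyP; rewrite lex_eq !weight_eq.
by case: (side u); case: (side v) => //= _; rewrite // eq_sym.
Qed.

Lemma exists_good (u v : T) : side u -> ~~ side v ->
  exists g : {ffun T -> 'I_#|T|}, injectiveb g && (SL g != SR g).
Proof.
move=> su sv.
pose g0 : {ffun T -> 'I_#|T|} := [ffun x : T => enum_rank x].
have ig0 : injective g0 by move=> x y; rewrite !ffunE; apply: enum_rank_inj.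
clearbody g0.
case: (boolP (SL g0 == SR g0)) => [/eqP E|NE]; last first.
  by exists g0; rewrite NE andbT; apply/injectiveP.
pose g1 : {ffun T -> 'I_#|T|} := [ffun x => g0 (tperm u v x)].
have ig1 : injective g1.
  by move=> x y; rewrite !ffunE => /ig0 h; apply: (perm_inj h).
exists g1; have -> : injectiveb g1 by apply/injectiveP.
rewrite /=.
have uv : u != v by apply/eqP => h; move: sv; rewrite -h su.
move: E; rewrite /SL /SR (bigD1 u su) (bigD1 v sv) /=.
rewrite (bigD1 u su) (bigD1 v sv) /=.
rewrite /label !ffunE tpermL tpermR.
have g1E : forall x, x != u -> x != v -> g1 x = g0 x.
  by move=> x xu xv; rewrite ffunE tpermD // eq_sym.
rewrite [X in _ + X != _](eq_bigr (fun i => (g0 i).+1)); last first.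
  move=> x /andP [sx xu]; rewrite g1E //.
  by apply/eqP => h; move: sv; rewrite -h sx.
rewrite [X in _ != _ + X](eq_bigr (fun i => (g0 i).+1)); last first.
  move=> x /andP [sx xv]; rewrite g1E //.
  by apply/eqP => h; move: sx; rewrite h su.
move=> E; apply/eqP => E2.
have : (g0 u : nat) = g0 v.
  lazymatch type of E with _ + ?A = _ + ?B =>
    have E3 : (g0 v).+1 + A = (g0 u).+1 + B := E2;
    move: E E3; generalize A B end.
  move=> A B; lia.
move/val_inj/ig0 => h; by rewrite h eqxx in uv.
Qed.

End S.

Lemma bigmin_leq (I : eqType) (s : seq I) (P : pred I) (F : I -> nat) x0 g :
  g \in s -> P g -> \big[minn/x0]_(i <- s | P i) F i <= F g.
Proof.
elim: s => // y s IH; rewrite inE big_cons => /orP [/eqP <- ->|gs Pg].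
  exact: geq_minl.
case: (P y); last exact: IH.
by apply: leq_trans (geq_minr _ _) (IH gs Pg).
Qed.

Theorem mainTheorem7 (n a b : nat) :
  1 < n -> 0 < a -> 0 < b -> a != b ->
  chi_ld (lexprod (Kbip a b) (Kbar n)) = 2.
Proof.
move=> n1 a0 b0 _.
change (@chi_ld (T a b n) (lexprod (Kbip a b) (Kbar n)) = 2).
have n0 : 0 < n by apply: ltnW.
pose u : T a b n := (inl (Ordinal a0), Ordinal n0).
pose v : T a b n := (inr (Ordinal b0), Ordinal n0).
have [g /andP [ig ne]] := @exists_good a b n u v erefl erefl.
have ag := @antimagic_iff a b n g ig a0 b0 n0 ne.
rewrite /chi_ld; apply/eqP; rewrite eqn_leq; apply/andP; split.
  have H1 := @bigmin_leq _ (index_enum _) (fun g => is_ld_antimagic (lexprod (Kbip a b) (Kbar n)) g) (num_weights (lexprod (Kbip a b) (Kbar n))) #|T a b n| g (mem_index_enum g) ag.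
  apply: leq_trans H1 _.
  rewrite /num_weights.
  have -> : 2 = size [:: SR a b n g; SL a b n g] by [].
  apply: uniq_leq_size; first exact: undup_uniq.
  move=> w; rewrite mem_undup => /mapP [x _ ->]; rewrite weight_eq.
  by case: (side _ _ _ x); rewrite !inE eqxx ?orbT.
apply: (big_ind (fun m => 2 <= m)).
- rewrite card_prod card_sum !card_ord; nia.
- by move=> x y hx hy; rewrite leq_min hx hy.
move=> h /andP [_ /forallP /(_ u) /forallP /(_ v)].
rewrite {1}/lexprod /= => hw.
rewrite /num_weights.
have -> : 2 = size [:: weight (lexprod (Kbip a b) (Kbar n)) h u;
                        weight (lexprod (Kbip a b) (Kbar n)) h v] by [].
apply: uniq_leq_size; first by rewrite /= inE hw.
by move=> w; rewrite !inE mem_undup => /orP [] /eqP ->; apply: map_f; rewrite mem_enum.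
Qed.
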